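(* Let $d\ge2$, $R=\mathbb{Z}[1/p: p\text{ prime},\,2\le p\le d]$, $S=R[s_1,\dots,s_{d-1}]$ graded by total degree, let \[f_{\mathbf{s}}(x)=\tfrac1dx^d-\tfrac1{d-1}(s_1+\cdots+s_{d-1})x^{d-1}+\cdots+(-1)^{d-1}s_1\cdots s_{d-1}x\in S[x]\] (the polynomial with $f_{\mathbf{s}}(0)=0$ and $f_{\mathbf{s}}'(x)=\prod_i(x-s_i)$), and let $F_i=f_{\mathbf{s}}(s_i)\in S$ for $1\le i\le d-1$. Then there exist an integer $D\ge1$ and elements $A_{ij}\in S$, each homogeneous of degree $D-d$, such that for every $i$, \[s_i^D=\sum_{j=1}^{d-1}A_{ij}F_j.\] *)

(* Defs.v *)
From HB Require Import structures.
From mathcomp Require Import all_boot all_order all_algebra.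
Set Implicit Arguments. Unset Strict Implicit. Unset Printing Implicit Defensive.
Import Order.TTheory GRing.Theory Num.Theory.
Local Open Scope ring_scope.

(* Polynomial ring rat[s_0, ..., s_(n-1)] as iterated univariate polynomials:
   mpoly 0 = rat, mpoly n.+1 = (mpoly n)[s_n]. *)
Fixpoint mpoly (n : nat) : comNzRingType :=
  match n with
  | 0 => rat
  | n'.+1 => {poly (mpoly n')}
  end.

(* the variable s_i (0 <= i < n) in mpoly n *)
Fixpoint mvar (n i : nat) : mpoly n :=
  match n return mpoly n with
  | 0 => 0
  | n'.+1 => if i == n' then ('X : {poly (mpoly n')}) else (mvar n' i)%:P
  end.

Fixpoint mcst (n : nat) (q : rat) : mpoly n :=
  match n return mpoly n with
  | 0 => q
  | n'.+1 => (mcst n' q)%:P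
  end.

(* R_d = Z[1/p : p prime, p <= d] as a subset of rat *)
Definition inRd (d : nat) (q : rat) : bool :=
  all (fun p => (p <= d)%N) (primes `|denq q|%N).

(* all coefficients lie in R_d, i.e. the polynomial lies in S = R_d[s] *)
Fixpoint inS (d : nat) (n : nat) : mpoly n -> bool :=
  match n return mpoly n -> bool with
  | 0 => fun q => inRd d q
  | n'.+1 => fun p => all (@inS d n') (polyseq (p : {poly (mpoly n')}))
  end.

(* homogeneous of total degree e (e : int; the zero polynomial is homogeneous
   of every degree, a nonzero one of negative degree never is) *)
Fixpoint homog (n : nat) : int -> mpoly n -> bool :=
  match n return int -> mpoly n -> bool with
  | 0 => fun e c => (c == 0) || (e == 0)
  | n'.+1 => fun e p =>
      all (fun k : nat => @homog n' (e - k%:Z) ((p : {poly (mpoly n')})`_k))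
          (iota 0 (size (p : {poly (mpoly n')})))
  end.

Definition fder (d : nat) : {poly (mpoly d.-1)} :=
  \prod_(i < d.-1) ('X - (mvar d.-1 i)%:P).

Definition fs (d : nat) : {poly (mpoly d.-1)} :=
  \sum_(k < size (fder d))
     ((fder d)`_k * mcst d.-1 (k.+1%:R)^-1)%:P * 'X^(k.+1).

Definition Fi (d : nat) (i : nat) : mpoly d.-1 := (fs d).[mvar d.-1 i].

(* Main.v *)
Require Import Defs.
From HB Require Import structures.
From mathcomp Require Import all_boot all_order all_algebra.
From mathcomp Require Import boolp classical_sets.
From mathcomp Require Import ring zify.
Set Implicit Arguments. Unset Strict Implicit. Unset Printing Implicit Defensive.
Import Order.TTheory GRing.Theory Num.Theory.
Local Open Scope ring_scope.

Section FieldLemma.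
Variable K : fieldType.

Lemma mult_lemma (f : {poly K}) (t : K) (n : nat) :
  (forall k, (0 < k <= n)%N -> (k%:R : K) != 0) ->
  f.[t] = 0 -> forall m, (m <= n)%N ->
  ('X - t%:P) ^+ m %| f^`() -> ('X - t%:P) ^+ m.+1 %| f.
Proof.
move=> hk ft; elim=> [|m IH] hm hd.
  by rewrite expr1 dvdp_XsubCl /root ft.
have := IH (ltnW hm) (dvdp_trans (dvdp_exp2l _ (leqnSn m)) hd).
case/dvdpP=> g fE.
have hX : ('X - t%:P) != 0 by rewrite polyXsubC_eq0.
move: hd; rewrite fE derivM deriv_exp derivXsubC mul1r /= dvdp_addr; last by rewrite dvdp_mull.
rewrite mulrnAr -scaler_nat dvdpZr ?hk ?ltnS //= exprS dvdp_mul2r ?expf_neq0 //.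
move=> hg.
have -> : g * (('X - t%:P) * ('X - t%:P) ^+ m) = g * ('X - t%:P) ^+ m.+1 by rewrite exprS.
by rewrite (exprS _ m.+1) dvdp_mul2r ?expf_neq0.
Qed.
End FieldLemma.

Section FieldLemma2.
Variable K : fieldType.

Lemma prod_count (s : seq K) t :
  ('X - t%:P) ^+ (count_mem t s) %| \prod_(u <- s) ('X - u%:P).
Proof.
rewrite (bigID (pred1 t)) /= dvdp_mulr //.
rewrite (eq_bigr (fun _ => 'X - t%:P)); last by move=> u /eqP ->.
by rewrite big_const_seq -Monoid.iteropE.
Qed.


Lemma undup_prod (s : seq K) :
  \prod_(t <- undup s) ('X - t%:P) ^+ (count_mem t s) = \prod_(u <- s) ('X - u%:P).
Proof. rewrite -[RHS]big_undup_iterop_count; apply: eq_bigr => i _; by rewrite Monoid.iteropE -(Monoid.iteropE (@GRing.mul _)). Qed.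

Lemma field_main (s : seq K) (f : {poly K}) :
  (0 < size s)%N ->
  (forall k, (0 < k <= size s)%N -> (k%:R : K) != 0) ->
  f^`() = \prod_(u <- s) ('X - u%:P) ->
  f.[0] = 0 -> (size f <= (size s).+2)%N ->
  (forall u, u \in s -> f.[u] = 0) ->
  forall u, u \in s -> u = 0.
Proof.
move=> s0 hk hf' f0 hsz hroot.
set c := fun t => count_mem t s.
have hdiv t : t \in s -> ('X - t%:P) ^+ (c t).+1 %| f.
  move=> ts; apply: (mult_lemma hk (hroot t ts)); first exact: count_size.
  by rewrite hf' prod_count.
have hQ : forall U, uniq U -> {subset U <= s} ->
    \prod_(t <- U) ('X - t%:P) ^+ (c t).+1 %| f.
  elim=> [|t U IH] /=; first by rewrite big_nil dvd1p.
  case/andP=> tU uU sub; rewrite big_cons Gauss_dvdp.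
    rewrite hdiv ?sub ?mem_head //= IH // => x xU.
    by apply: sub; rewrite in_cons xU orbT.
  apply: coprimep_expl; rewrite coprimep_sym coprimep_XsubC /root horner_prod.
  rewrite prodf_seq_neq0; apply/allP=> x xU /=; rewrite horner_exp hornerXsubC.
  rewrite expf_neq0 // subr_eq0; apply/eqP=> tx; by rewrite tx xU in tU.
have P1 : \prod_(u <- s) ('X - u%:P) != 0 by rewrite monic_neq0 // monic_prod_XsubC.
have fn0 : f != 0 by apply: contraNneq P1 => f0'; rewrite -hf' f0' deriv0.
set U := undup s.
have hQU := hQ U (undup_uniq s) ltac:(by move=> x; rewrite mem_undup).
have QE : \prod_(t <- U) ('X - t%:P) ^+ (c t).+1 =
    \prod_(u <- s) ('X - u%:P) * \prod_(t <- U) ('X - t%:P).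
  by rewrite -undup_prod -big_split /=; apply: eq_bigr => t _; rewrite exprSr.
have szQ : size (\prod_(t <- U) ('X - t%:P) ^+ (c t).+1) = ((size s + size U)%N).+1.
  rewrite QE size_mul //; last by rewrite monic_neq0 // monic_prod_XsubC.
  by rewrite !size_prod_XsubC addSn addnS.
have := dvdp_leq fn0 hQU; rewrite szQ => le1.
have le2 : (size U <= 1)%N.
  by have := leq_trans le1 hsz; rewrite !ltnS -addn1 leq_add2l.
case hU : U le2 => [|t [|t' U']] // _.
  have [x xs] : exists x, x \in s by case: (s) s0 => // x ? _; exists x; rewrite mem_head.
  by move: xs; rewrite -mem_undup -/U hU.
have allt : forall u, u \in s -> u = t.
  by move=> u; rewrite -mem_undup -/U hU inE => /eqP.
have t0 : t = 0.
  move: hQU; rewrite hU big_cons big_nil mulr1 => /dvdpP [g fE].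
  move: szQ; rewrite hU big_cons big_nil mulr1 /= => szQ.
  have gn0 : g != 0 by apply: contraNneq fn0 => g0; rewrite fE g0 mul0r.
  have sg : (size g <= 1)%N.
    move: hsz; rewrite fE size_mul ?expf_neq0 ?polyXsubC_eq0 // szQ.
    rewrite addnS /= => h; clear -h; move: h; set a := size g; set b := size s.
lia.
  move: f0; rewrite fE hornerM horner_exp hornerXsubC (size1_polyC sg) hornerC.
  move/eqP; rewrite mulf_eq0 => /orP [g00|].
    by move: gn0; rewrite (size1_polyC sg) (eqP g00) eqxx.
  by rewrite expf_eq0 sub0r oppr_eq0 => /andP [_ /eqP].
by move=> u us; rewrite (allt u us) t0.
Qed.
End FieldLemma2.

Section PrimeQuot.
Variable R : comNzRingType.
Variable J : R -> Prop.
Hypotheses (hJ0 : J 0) (hJ1 : ~ J 1) (hJadd : forall x y, J x -> J y -> J (x + y))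
  (hJmul : forall a x, J x -> J (a * x)) (hJprime : forall x y, J (x * y) -> J x \/ J y).

Definition Jb : R -> bool := fun x => `[< J x >].

Lemma Jb_idealr : idealr_closed Jb.
Proof.
split; first exact/asboolP.
  by apply/negP => /asboolP.
by move=> a u v /asboolP Ju /asboolP Jv; apply/asboolP; apply: hJadd => //; apply: hJmul.
Qed.

HB.instance Definition _ := isIdealr.Build R Jb Jb_idealr.

Lemma Jb_prime : prime_idealr_closed Jb.
Proof.
move=> u v /asboolP /hJprime [] ?; apply/orP; [left|right]; exact/asboolP.
Qed.

HB.instance Definition _ := isPrimeIdealrClosed.Build R Jb Jb_prime.

Definition JbI : prime_idealr R := PrimeIdealr.clone R Jb _.
Definition QD := {ideal_quot JbI}.
HB.instance Definition _ := GRing.ComNzRing.on QD.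

Definition QDunit : {pred QD} := fun x => `[< exists y, y * x = 1 >].
Definition QDinv (x : QD) : QD :=
  match pselect (exists y, y * x = 1) with
  | left h => projT1 (cid h)
  | right _ => x
  end.

Lemma QDmulVx : {in QDunit, left_inverse 1 QDinv *%R}.
Proof.
move=> x /asboolP h; rewrite /QDinv; case: pselect => // h'.
by case: (cid h') => y /=.
Qed.

Lemma QDunitPl : forall x y : QD, y * x = 1 -> QDunit x.
Proof. by move=> x y h; apply/asboolP; exists y. Qed.

Lemma QDinv_out : {in [predC QDunit], QDinv =1 id}.
Proof.
move=> x; rewrite inE /= => /asboolPn h; rewrite /QDinv; case: pselect => // h'.
Qed.

HB.instance Definition _ := GRing.ComNzRing_hasMulInverse.Build QD QDmulVx QDunitPl QDinv_out.

Lemma QD_integral : GRing.integral_domain_axiom QD.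
Proof. move=> x y; exact: Quotient.rquot_IdomainAxiom. Qed.

HB.instance Definition _ := GRing.ComUnitRing_isIntegral.Build QD QD_integral.

Definition KF := {fraction QD}.

Definition piQ (x : R) : QD := (\pi_({ideal_quot JbI}) x)%qT.

Lemma piQD x y : piQ (x + y) = piQ x + piQ y.
Proof. by rewrite /piQ rmorphD. Qed.
Lemma piQM x y : piQ (x * y) = piQ x * piQ y.
Proof. by rewrite /piQ rmorphM. Qed.
Lemma piQ1 : piQ 1 = 1.
Proof. by rewrite /piQ rmorph1. Qed.
Lemma piQ0 x : (piQ x == 0) = `[< J x >].
Proof. rewrite /piQ -(rmorph0 (\pi_({ideal_quot JbI}))%qT).
have := Quotient.idealrBE JbI x 0; rewrite subr0 => <-. by []. Qed.

Definition phi (x : R) : KF := tofrac (piQ x).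

Lemma phi_zmod : zmod_morphism phi.
Proof. have piQB x y : piQ (x - y) = piQ x - piQ y by rewrite /piQ rmorphB.
by move=> x y; rewrite /phi piQB rmorphB. Qed.
Lemma phi_monoid : monoid_morphism phi.
Proof. split; first by rewrite /phi piQ1 rmorph1.
by move=> x y; rewrite /phi piQM rmorphM. Qed.

HB.instance Definition _ := GRing.isZmodMorphism.Build R KF phi phi_zmod.
HB.instance Definition _ := GRing.isMonoidMorphism.Build R KF phi phi_monoid.

Lemma phi0 x : (phi x == 0) = `[< J x >].
Proof. by rewrite /phi tofrac_eq0 piQ0. Qed.

End PrimeQuot.

Section Abstract.
Variable Q : comNzRingType.

Definition gen (n : nat) (G : 'I_n -> Q) (x : Q) : Prop :=
  exists A : 'I_n -> Q, x = \sum_j A j * G j.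

Definition PJ (n : nat) (G : 'I_n -> Q) (a : Q) (J : Q -> Prop) : Prop :=
  [/\ J 0, (forall x y, J x -> J y -> J (x + y)), (forall c x, J x -> J (c * x)),
      (forall x, gen G x -> J x) & (forall N, ~ J (a ^+ N))].

Lemma gen_PJ n (G : 'I_n -> Q) a : (forall N, ~ gen G (a ^+ N)) -> PJ G a (gen G).
Proof.
move=> hN; split => //.
- by exists (fun _ => 0); rewrite big1 // => j _; rewrite mul0r.
- move=> x y [A ->] [B ->]; exists (fun j => A j + B j).
  by rewrite -big_split /=; apply: eq_bigr => j _; rewrite mulrDl.
- move=> c x [A ->]; exists (fun j => c * A j).
  by rewrite mulr_sumr; apply: eq_bigr => j _; rewrite mulrA.
Qed.

Lemma exists_prime n (G : 'I_n -> Q) (a : Q) :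
  (forall N, ~ gen G (a ^+ N)) ->
  exists J : Q -> Prop,
    [/\ J 0, ~ J 1, (forall x y, J x -> J y -> J (x + y)),
        (forall c x, J x -> J (c * x)) & (forall x y, J (x * y) -> J x \/ J y)]
    /\ (forall j, J (G j)) /\ ~ J a.
Proof.
move=> hN.
pose T := {J : Q -> Prop | PJ G a J}.
pose R (s t : T) := `[< forall x, sval s x -> sval t x >].
have [| | | |t tmax] := @Zorn T R.
- by move=> s; apply/asboolP.
- by move=> r s t /asboolP h1 /asboolP h2; apply/asboolP => x /h1 /h2.
- move=> [s Ps] [t Pt] /asboolP /= h1 /asboolP /= h2.
  have e : s = t by apply: funext => x; apply: propext; split; [apply: h1|apply: h2].
  by subst; congr exist; apply: Prop_irrelevance.
- move=> A Atot.
  case: (pselect (exists s, A s)) => [[s0 As0]|nA]; last first.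
    by exists (exist _ (gen G) (gen_PJ hN)) => s As; case: nA; exists s.
  pose U x := exists s, A s /\ sval s x.
  have PU : PJ G a U.
    split.
    - by exists s0; split => //; case: (svalP s0).
    - move=> x y [s1 [As1 x1]] [s2 [As2 y2]].
      case: (Atot _ _ As1 As2) => /asboolP h.
        exists s2; split => //; case: (svalP s2) => _ hadd _ _ _; apply: hadd => //; exact: h.
      exists s1; split => //; case: (svalP s1) => _ hadd _ _ _; apply: hadd => //; exact: h.
    - move=> c x [s1 [As1 x1]]; exists s1; split => //; case: (svalP s1) => _ _ hmul _ _.
      exact: hmul.
    - move=> x gx; exists s0; split => //; case: (svalP s0) => _ _ _ hg _; exact: hg.
    - move=> N [s1 [As1 x1]]; case: (svalP s1) => _ _ _ _ hav; exact: (hav N).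
  by exists (exist _ U PU) => s As; apply/asboolP => x xs; exists s.
case: t tmax => J PJt /= tmax; case: (PJt) => J0 Jadd Jmul Jgen Jav.
exists J; split; last split.
- split => //.
  + by move=> J1; apply: (Jav 0%N); rewrite expr0.
  + move=> x y Jxy.
    case: (pselect (J x)) => [Jx|nJx]; first by left.
    case: (pselect (J y)) => [Jy|nJy]; first by right.
    have ext : forall z, ~ J z -> exists N, exists j b, J j /\ a ^+ N = j + b * z.
      move=> z nJz; case: (pselect (exists N, exists j b, J j /\ a ^+ N = j + b * z)) => // hno.
      pose Jz w := exists j b, J j /\ w = j + b * z.
      have PJz : PJ G a Jz.
        split.
        - by exists 0, 0; rewrite mul0r addr0.
        - move=> u v [j1 [b1 [J1 ->]]] [j2 [b2 [J2 ->]]]; exists (j1 + j2), (b1 + b2).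
          by split; [apply: (Jadd) | rewrite mulrDl addrACA].
        - move=> c u [j1 [b1 [J1 ->]]]; exists (c * j1), (c * b1).
          by split; [apply: (Jmul) | rewrite mulrDr mulrA].
        - by move=> u gu; exists u, 0; rewrite mul0r addr0; split => //; apply: (Jgen).
        - by move=> N hJ; apply: hno; exists N.
      have hR : R (exist _ J PJt) (exist _ Jz PJz).
        by apply/asboolP => w Jw /=; exists w, 0; rewrite mul0r addr0.
      have := tmax _ hR => /(congr1 sval) /= eJ; case: nJz; have : Jz z by exists 0, 1; rewrite add0r mul1r.
      by rewrite eJ.
    have [N [j1 [b1 [J1 e1]]]] := ext x nJx.
    have [M [j2 [b2 [J2 e2]]]] := ext y nJy.
    exfalso; apply: (Jav (N + M)%N); rewrite exprD e1 e2.
    rewrite mulrDl !mulrDr.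
apply: (Jadd).
      apply: (Jadd); [exact: (Jmul) | by rewrite mulrC; apply: (Jmul)].
    apply: (Jadd); [exact: (Jmul) | by rewrite mulrACA; apply: (Jmul)].
- by move=> j; apply: (Jgen); exists (fun k => (k == j)%:R); rewrite (bigD1 j) //= eqxx mul1r big1 ?addr0 // => k /negPf ->; rewrite mul0r.
- by move=> Ja; apply: (Jav 1%N); rewrite expr1.
Qed.

End Abstract.

Theorem nil_abstract (Q : comNzRingType) (n : nat) (s : 'I_n -> Q) (f : {poly Q}) :
  (0 < n)%N -> (forall k, (0 < k <= n)%N -> exists y : Q, y * k%:R = 1) ->
  f^`() = \prod_(j < n) ('X - (s j)%:P) -> f.[0] = 0 -> (size f <= n.+2)%N ->
  forall i, exists N, gen (fun j => f.[s j]) (s i ^+ N).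
Proof.
move=> n0 hk hf' hf0 hsz i.
case: (pselect (exists N, gen (fun j => f.[s j]) (s i ^+ N))) => // hno.
have hN : forall N, ~ gen (fun j => f.[s j]) (s i ^+ N) by move=> N h; apply: hno; exists N.
have [J [[J0 J1 Jadd Jmul Jprime] [Jg Ja]]] := exists_prime hN.
pose ph := phi J0 J1 Jadd Jmul Jprime.
pose sq := [seq ph (s j) | j <- enum 'I_n].
have szsq : size sq = n by rewrite size_map size_enum_ord.
have hk' : forall k, (0 < k <= size sq)%N -> (k%:R : KF J0 J1 Jadd Jmul Jprime) != 0.
  rewrite szsq; move=> k hk0; apply/negP => /eqP h0.
  have [y hy] := hk k hk0.
  have : ph y * k%:R = 1 by rewrite -(rmorph_nat ph) -rmorphM hy rmorph1.
  by rewrite h0 mulr0 => /eqP; rewrite eq_sym oner_eq0.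
have hd : (map_poly ph f)^`() = \prod_(u <- sq) ('X - u%:P).
  by rewrite deriv_map hf' rmorph_prod big_map big_enum /=; apply: eq_bigr => j _; rewrite map_polyXsubC.
have h0' : (map_poly ph f).[0] = 0 by rewrite -(rmorph0 ph) horner_map hf0.
have hs : (size (map_poly ph f) <= (size sq).+2)%N.
  by rewrite szsq; apply: leq_trans hsz; rewrite /map_poly size_poly.
have hr : forall u, u \in sq -> (map_poly ph f).[u] = 0.
  move=> u /mapP [j _ ->]; rewrite horner_map; apply/eqP; rewrite phi0; apply/asboolP.
  exact: Jg.
have := @field_main _ sq (map_poly ph f) _ hk' hd h0' hs hr (ph (s i)).
have mi : ph (s i) \in sq by apply: (map_f (fun j => ph (s j))); rewrite mem_enum.
rewrite szsq => /(_ n0 mi) /eqP.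
by rewrite phi0 => /asboolP.
Qed.

Lemma inRdP d q : reflect (forall p, prime p -> (p %| `|denq q|)%N -> (p <= d)%N) (inRd d q).
Proof.
apply: (iffP allP) => h p.
  move=> pp pd; apply: h; rewrite mem_primes pp pd andbT absz_gt0 denq_neq0 //.
by rewrite mem_primes => /and3P [pp _ pd]; apply: h.
Qed.

Lemma den_div_dvd (n m : int) : m != 0 -> (`|denq (n%:~R / m%:~R)| %| `|m|)%N.
Proof.
move=> m0; rewrite -(fracqE (n, m)) den_fracq /= m0 /=.
by apply: dvdn_div; apply: dvdn_gcdr.
Qed.

Lemma den_gen d (n m : int) : m != 0 ->
  (forall p, prime p -> (p %| `|m|)%N -> (p <= d)%N) ->
  inRd d (n%:~R / m%:~R).
Proof.
move=> m0 hm; apply/inRdP => p pp pd; apply: hm => //.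
exact: dvdn_trans pd (den_div_dvd n m0).
Qed.

Lemma inRd_mul d a b : inRd d a -> inRd d b -> inRd d (a * b).
Proof.
move=> /inRdP ha /inRdP hb.
have e : a * b = (numq a * numq b)%:~R / (denq a * denq b)%:~R.
  by rewrite rmorphM [in RHS]rmorphM /= -mulf_div !divq_num_den.
rewrite e; apply: den_gen => //; first by rewrite mulf_neq0 ?denq_neq0.
move=> p pp; rewrite abszM Euclid_dvdM // => /orP [] h; [exact: ha | exact: hb].
Qed.

Lemma inRd_add d a b : inRd d a -> inRd d b -> inRd d (a + b).
Proof.
move=> /inRdP ha /inRdP hb.
have e : a + b = (numq a * denq b + numq b * denq a)%:~R / (denq a * denq b)%:~R.
  rewrite rmorphM rmorphD !rmorphM /= -addf_div ?intr_eq0 ?denq_neq0 //.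
  by rewrite !divq_num_den.
rewrite e; apply: den_gen => //; first by rewrite mulf_neq0 ?denq_neq0.
move=> p pp; rewrite abszM Euclid_dvdM // => /orP [] h; [exact: ha | exact: hb].
Qed.

Lemma inRd_opp d a : inRd d a -> inRd d (- a).
Proof. by rewrite /inRd denqN. Qed.

Lemma inRd_int d (n : int) : inRd d n%:~R.
Proof. by rewrite /inRd denq_int. Qed.

Lemma inRd_inv d k : (0 < k <= d)%N -> inRd d (k%:R^-1).
Proof.
case/andP=> k0 kd; apply/inRdP => p pp.
have -> : (k%:R : rat) = (k%:Z)%:~R by [].
rewrite denqVz ?intr_eq0 ?lt0n_neq0 //= => pk.
exact: leq_trans (dvdn_leq k0 pk) kd.
Qed.

Section InS.
Variable d : nat.

Lemma inS0 n : @inS d n 0.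
Proof. by case: n => [|n] /=; [exact: (inRd_int d 0) | rewrite polyseq0]. Qed.

Lemma inSP n (p : mpoly n.+1) : reflect (forall k, @inS d n p`_k) (@inS d n.+1 p).
Proof.
apply: (iffP allP) => h.
  move=> k; case: (ltnP k (size p)) => hk; first by apply: h; rewrite mem_nth.
  by rewrite nth_default // inS0.
by move=> x xp; rewrite -(nth_index 0 xp); apply: h.
Qed.

Lemma inSD n : forall x y : mpoly n, @inS d n x -> @inS d n y -> @inS d n (x + y).
Proof.
elim: n => [|n IH] x y; first exact: inRd_add.
move=> /inSP hx /inSP hy; apply/inSP => k; rewrite coefD; exact: IH.
Qed.

Lemma inSN n : forall x : mpoly n, @inS d n x -> @inS d n (- x).
Proof.
elim: n => [|n IH] x; first exact: inRd_opp.
move=> /inSP hx; apply/inSP => k; rewrite coefN; exact: IH.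
Qed.

Lemma inS_sum n I (r : seq I) (P : pred I) (F : I -> mpoly n) :
  (forall i, P i -> @inS d n (F i)) -> @inS d n (\sum_(i <- r | P i) F i).
Proof.
move=> h; elim/big_ind: _ => //; [exact: inS0 | exact: inSD].
Qed.

Lemma inSM n : forall x y : mpoly n, @inS d n x -> @inS d n y -> @inS d n (x * y).
Proof.
elim: n => [|n IH] x y; first exact: inRd_mul.
move=> /inSP hx /inSP hy; apply/inSP => k; rewrite coefM.
by apply: inS_sum => i _; apply: IH.
Qed.

Lemma inS_mcst n q : inRd d q -> @inS d n (mcst n q).
Proof.
elim: n => [|n IH] //= hq; apply/inSP => k; rewrite coefC.
by case: eqP => _; [exact: IH | exact: inS0].
Qed.

Lemma mcst1 n : mcst n 1 = 1.
Proof. by elim: n => [|n IH] //=; rewrite IH. Qed.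

Lemma inS1 n : @inS d n 1.
Proof. by rewrite -mcst1; apply: inS_mcst; exact: (inRd_int d 1). Qed.

Lemma inS_mvar n i : @inS d n (mvar n i).
Proof.
elim: n => [|n IH] /=; first exact: (inRd_int d 0).
case: eqP => _; apply/inSP => k.
  by rewrite coefX; case: eqP => _; [exact: inS1 | exact: inS0].
by rewrite coefC; case: eqP => _; [exact: IH | exact: inS0].
Qed.

End InS.

Lemma homog0 n e : @homog n e 0.
Proof. by case: n => [|n] /=; rewrite ?size_poly0. Qed.

Lemma homogP n e (p : mpoly n.+1) :
  reflect (forall k : nat, @homog n (e - k%:Z) p`_k) (@homog n.+1 e p).
Proof.
apply: (iffP allP) => h.
  move=> k; case: (ltnP k (size p)) => hk; first by apply: h; rewrite mem_iota.
  by rewrite nth_default // homog0.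
by move=> k _; apply: h.
Qed.

Lemma homogD n : forall e (x y : mpoly n), homog e x -> homog e y -> homog e (x + y).
Proof.
elim: n => [|n IH] e x y /=.
  move=> /orP [/eqP ->|e0] /orP [/eqP ->|e0']; by rewrite ?addr0 ?add0r ?eqxx ?e0 ?e0' ?orbT.
move=> /homogP hx /homogP hy; apply/homogP => k; rewrite coefD; exact: IH.
Qed.

Lemma homogN n : forall e (x : mpoly n), homog e x -> homog e (- x).
Proof.
elim: n => [|n IH] e x /=.
  by move=> /orP [/eqP ->|e0]; rewrite ?oppr0 ?eqxx ?e0 ?orbT.
move=> /homogP hx; apply/homogP => k; rewrite coefN; exact: IH.
Qed.

Lemma homog_sum n e I (r : seq I) (P : pred I) (F : I -> mpoly n) :
  (forall i, P i -> homog e (F i)) -> homog e (\sum_(i <- r | P i) F i).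
Proof. by move=> h; elim/big_ind: _ => //; [exact: homog0 | exact: homogD]. Qed.

Lemma homogM n : forall a b (x y : mpoly n), homog a x -> homog b y -> homog (a + b) (x * y).
Proof.
elim: n => [|n IH] a b x y /=.
  move=> /orP [/eqP ->|/eqP ->]; first by rewrite mul0r eqxx.
  move=> /orP [/eqP ->|/eqP ->]; first by rewrite mulr0 eqxx.
  by rewrite addr0 eqxx orbT.
move=> /homogP hx /homogP hy; apply/homogP => k; rewrite coefM.
apply: homog_sum => i _.
have -> : a + b - k%:Z = (a - i%:Z) + (b - (k - i)%N%:Z).
  rewrite -subzn; last by rewrite -ltnS.
  ring.
by apply: IH.
Qed.

Lemma homog_mcst n q : homog 0 (mcst n q).
Proof.
elim: n => [|n IH] /=; first by rewrite eqxx orbT.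
apply/homogP => k; rewrite coefC; case: eqP => [->|_]; last exact: homog0.
by rewrite subr0.
Qed.

Lemma homog_mvar n i : homog 1 (mvar n i).
Proof.
elim: n => [|n IH] //=.
case: eqP => _; apply/homogP => k.
  rewrite coefX; case: eqP => [->|_]; last exact: homog0.
  by rewrite subrr -mcst1; apply: homog_mcst.
by rewrite coefC; case: eqP => [->|_]; [rewrite subr0 | exact: homog0].
Qed.

Fixpoint hc (n : nat) : int -> mpoly n -> mpoly n :=
  match n return int -> mpoly n -> mpoly n with
  | 0 => fun e c => if e == 0 then c else 0
  | n'.+1 => fun e (p : mpoly n'.+1) =>
      \poly_(k < size (p : {poly mpoly n'})) @hc n' (e - k%:Z) (p : {poly mpoly n'})`_k
  end.
Arguments hc : clear implicits.

Lemma hc0 n : forall e, hc n e 0 = 0.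
Proof.
elim: n => [|n IH] e /=; first by case: ifP.
by apply/polyP => k; rewrite coef_poly size_poly0 coef0.
Qed.

Lemma hc_coef n e (p : mpoly n.+1) k : (hc n.+1 e p)`_k = hc n (e - k%:Z) p`_k.
Proof.
rewrite /= coef_poly; case: ltnP => // hk.
by rewrite nth_default // hc0.
Qed.

Lemma hcD n : forall e (x y : mpoly n), hc n e (x + y) = hc n e x + hc n e y.
Proof.
elim: n => [|n IH] e x y; first by rewrite /=; case: ifP; rewrite ?addr0.
by apply/polyP => k; rewrite coefD !hc_coef coefD IH.
Qed.

Lemma hcN n : forall e (x : mpoly n), hc n e (- x) = - hc n e x.
Proof.
elim: n => [|n IH] e x; first by rewrite /=; case: ifP; rewrite ?oppr0.
by apply/polyP => k; rewrite coefN !hc_coef coefN IH.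
Qed.

Lemma hc_sum n e I (r : seq I) (P : pred I) (F : I -> mpoly n) :
  hc n e (\sum_(i <- r | P i) F i) = \sum_(i <- r | P i) hc n e (F i).
Proof.
by elim/big_rec2: _ => [|i y1 y2 _ <-]; rewrite ?hc0 ?hcD.
Qed.

Lemma hc_homog n : forall e (x : mpoly n), homog e (hc n e x).
Proof.
elim: n => [|n IH] e x /=; first by case: ifP => h; rewrite ?eqxx ?h ?orbT.
apply/homogP => k; rewrite hc_coef; exact: IH.
Qed.

Lemma hc_id n : forall e (x : mpoly n), homog e x -> hc n e x = x.
Proof.
elim: n => [|n IH] e x /=.
  by move=> /orP [/eqP ->|/eqP ->]; [case: ifP | rewrite eqxx].
move=> /homogP h; apply/polyP => k; rewrite hc_coef; exact: IH.
Qed.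

Lemma hc_inS d n : forall e (x : mpoly n), inS d x -> inS d (hc n e x).
Proof.
elim: n => [|n IH] e x /=; first by case: ifP => // _ _; exact: (inRd_int d 0).
move=> /inSP h; apply/inSP => k; rewrite hc_coef; exact: IH.
Qed.

Lemma hcM n : forall b e (x y : mpoly n), homog b y ->
  hc n e (x * y) = hc n (e - b) x * y.
Proof.
elim: n => [|n IH] b e x y /=.
  move=> /orP [/eqP ->|/eqP ->]; first by rewrite !mulr0; case: ifP.
  by rewrite subr0; case: ifP; rewrite ?mul0r.
move=> /homogP hy; apply/polyP => k; rewrite hc_coef !coefM hc_sum.
apply: eq_bigr => i _; rewrite hc_coef (IH (b - (k - i)%N%:Z)) //.
congr (hc _ _ _ * _).
rewrite -subzn; last by rewrite -ltnS.
ring.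
Qed.

Lemma mcstM n a b : mcst n (a * b) = mcst n a * mcst n b.
Proof. by elim: n => [|n IH] //=; rewrite IH polyCM. Qed.

Lemma mcst_nat n k : mcst n k%:R = k%:R.
Proof. by elim: n => [|n IH] //=; rewrite IH polyC_natr. Qed.

Lemma homog_exp n k (x : mpoly n) : homog 1 x -> homog k%:Z (x ^+ k).
Proof.
move=> hx; elim: k => [|k IH]; first by rewrite expr0 -(mcst1 n) homog_mcst.
by rewrite exprS -addn1 PoszD addrC; apply: homogM.
Qed.

Lemma homogC n e (c : mpoly n) : homog e c -> @homog n.+1 e c%:P.
Proof. by move=> h; apply/homogP => k; rewrite coefC; case: eqP => [->|_]; rewrite ?subr0 ?homog0. Qed.

Lemma inSC d n (c : mpoly n) : inS d c -> @inS d n.+1 c%:P.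
Proof. by move=> h; apply/inSP => k; rewrite coefC; case: eqP => _; rewrite ?inS0. Qed.

Lemma inSX d n : @inS d n.+1 'X.
Proof. by apply/inSP => k; rewrite coefX; case: eqP => _; rewrite ?inS0 ?inS1. Qed.

Lemma inS_prod d n I (r : seq I) (P : pred I) (F : I -> mpoly n) :
  (forall i, P i -> inS d (F i)) -> inS d (\prod_(i <- r | P i) F i).
Proof. by move=> h; elim/big_ind: _ => //; [exact: inS1 | exact: inSM]. Qed.

Lemma inS_exp d n (x : mpoly n) k : inS d x -> inS d (x ^+ k).
Proof. by move=> h; elim: k => [|k IH]; rewrite ?expr0 ?inS1 // exprS inSM. Qed.

Lemma prod_homog n m (c : 'I_m -> mpoly n) : (forall i, homog 1 (c i)) ->
  forall k, homog (m%:Z - k%:Z) (\prod_(i < m) ('X - (c i)%:P))`_k.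
Proof.
elim: m c => [|m IH] c hc k.
  rewrite big_ord0 coef1; case: eqP => [->|_]; last exact: homog0.
  by rewrite subr0 -(mcst1 n) homog_mcst.
rewrite big_ord_recr /= mulrBr coefB coefMX coefMC.
apply: homogD.
  case: eqP => [->|/eqP k0]; first exact: homog0.
  have kE : k = (k.-1).+1 by rewrite prednK // lt0n.
  have -> : (m.+1)%:Z - k%:Z = m%:Z - (k.-1)%:Z.
    by rewrite {1}kE -[(k.-1).+1]addn1 -[m.+1]addn1 !PoszD; ring.
  exact: IH.
have := IH (fun i => c (widen_ord (leqnSn m) i)) (fun i => hc _) k.
have hcm := hc ord_max.
move=> h; have := homogM h hcm.
have -> : m%:Z - k%:Z + 1 = (m.+1)%:Z - k%:Z by rewrite -[m.+1]addn1 PoszD; ring.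
by move=> h2; apply: homogN.
Qed.

Lemma size_fder d : size (fder d) = d.-1.+1.
Proof. by rewrite /fder size_prod_XsubC /index_enum /= -enumT size_enum_ord. Qed.

Lemma fs_deriv d : (fs d)^`() = fder d.
Proof.
rewrite /fs raddf_sum /= -[RHS]coefK poly_def; apply: eq_bigr => k _.
rewrite deriv_mulC derivXn /= mulrnAr -mulrnAl -polyCMn mul_polyC.
congr (_ *: _); rewrite -mulrnAr -(mulr_natr (mcst d.-1 _)) -(mcst_nat (d.-1) k.+1) -mcstM mulVf ?mcst1 ?mulr1 //.
by rewrite pnatr_eq0.
Qed.

Lemma fs_at0 d : (fs d).[0] = 0.
Proof.
rewrite /fs horner_sum big1 // => k _.
by rewrite hornerCM hornerXn expr0n /= mulr0.
Qed.

Lemma size_fs d : (size (fs d) <= d.-1.+2)%N.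
Proof.
apply/leq_sizeP => j hj; rewrite /fs coef_sum big1 // => k _.
rewrite coefCM coefXn; case: eqP => [ek|_]; last by rewrite mulr0.
have hk : (k < d.-1.+1)%N by rewrite -size_fder; exact: ltn_ord.
by move: hj; rewrite ek ltnS leqNgt hk.
Qed.

Lemma inS_fder d : @inS d (d.-1).+1 (fder d).
Proof.
rewrite /fder; apply: inS_prod => i _; apply: inSD; first exact: inSX.
by apply: inSN; apply: inSC; apply: inS_mvar.
Qed.

Lemma inS_fs d : (1 <= d)%N -> @inS d (d.-1).+1 (fs d).
Proof.
move=> d1; rewrite /fs; apply: inS_sum => k _; apply: inSM.
  apply: inSC; apply: inSM; first by move/inSP: (inS_fder d); apply.
  apply: inS_mcst; apply: inRd_inv; rewrite ltn0Sn /=.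
  have hk : (k < d.-1.+1)%N by rewrite -size_fder; exact: ltn_ord.
  by rewrite prednK in hk.
by apply: inS_exp; apply: inSX.
Qed.

Lemma Fi_homog d j : (1 <= d)%N -> homog d%:Z (Fi d j).
Proof.
move=> d1; rewrite /Fi /fs horner_sum; apply: homog_sum => k _.
rewrite hornerCM hornerXn.
have hk : (k < d.-1.+1)%N by rewrite -size_fder; exact: ltn_ord.
have := prod_homog (fun i : 'I_(d.-1) => homog_mvar (d.-1) i) k.
move=> h1; have h2 := homogM h1 (homog_mcst (d.-1) (k.+1%:R)^-1).
have h3 := homogM h2 (homog_exp k.+1 (homog_mvar (d.-1) j)).
have -> : d%:Z = d.-1%:Z - k%:Z + 0 + k.+1%:Z.
  by rewrite -[k.+1]addn1 -{1}(prednK d1) -[(d.-1).+1]addn1 !PoszD; ring.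
exact: h3.
Qed.

Section SubS.
Variables (d n : nat).

Definition inSp : {pred mpoly n} := fun x => @inS d n x.

Lemma inSp_subring : GRing.subring_closed inSp.
Proof.
split; first exact: inS1.
  by move=> x y hx hy; apply: inSD => //; apply: inSN.
by move=> x y hx hy; apply: inSM.
Qed.

Record Sty := MkS { Sval : mpoly n; Sprop : inSp Sval }.
HB.instance Definition _ := [isSub for Sval].
HB.instance Definition _ := [Choice of Sty by <:].
HB.instance Definition _ := GRing.SubChoice_isSubComNzRing.Build (mpoly n) inSp Sty inSp_subring.

Lemma SvalD (x y : Sty) : val (x * y) = val x * val y.
Proof. by rewrite rmorphM. Qed.

End SubS.

Theorem lemma2p3 (d : nat) (hd : (2 <= d)%N) :
  exists D : nat, (1 <= D)%N /\
  exists A : 'I_d.-1 -> 'I_d.-1 -> mpoly d.-1,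
    (forall i j, inS d (A i j) /\ homog (D%:Z - d%:Z) (A i j)) /\
    (forall i : 'I_d.-1,
       mvar d.-1 i ^+ D = \sum_(j < d.-1) A i j * Fi d j).
Proof.
have d1 : (1 <= d)%N by apply: leq_trans hd.
pose S := Sty d d.-1.
have vinj : injective (val : S -> mpoly d.-1) := val_inj.
pose sS (j : 'I_d.-1) : S := MkS (inS_mvar d d.-1 j : @inSp d d.-1 (mvar d.-1 j)).
pose fsS : {poly S} := \poly_(k < size (fs d)) insubd (0 : S) (fs d)`_k.
have hmap : map_poly val fsS = fs d.
  apply/polyP => k; rewrite coef_map coef_poly; case: ltnP => hk.
    by apply: insubdK; move/inSP: (inS_fs d1); apply.
  by rewrite [RHS]nth_default //; apply: raddf0.
have hder : fsS^`() = \prod_(j < d.-1) ('X - (sS j)%:P).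
  apply: (map_inj_poly vinj (rmorph0 _)).
  rewrite -deriv_map hmap fs_deriv rmorph_prod /fder; apply: eq_bigr => j _.
  rewrite rmorphB /=; congr (_ - _).
    by apply/polyP => k; rewrite coef_map_id0 //= !coefX; case: eqP.
  by apply/polyP => k; rewrite coef_map_id0 //= !coefC; case: eqP.
have h0 : fsS.[0] = 0.
  apply: vinj; have := horner_map val fsS 0; rewrite hmap rmorph0 fs_at0 => e.
  by rewrite -e.
have hsz : (size fsS <= d.-1.+2)%N.
  by rewrite -(size_map_inj_poly vinj (rmorph0 _)) hmap size_fs.
have hunits : forall k, (0 < k <= d.-1)%N -> exists y : S, y * k%:R = 1.
  move=> k /andP [k0 kd].
  have kd' : (0 < k <= d)%N by rewrite k0 (leq_trans kd) // leq_pred.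
  have hin : @inSp d d.-1 (mcst d.-1 k%:R^-1) := inS_mcst d.-1 (inRd_inv kd').
  exists (MkS hin); apply: vinj; rewrite rmorphM rmorph_nat rmorph1 /=.
  by rewrite -(mcst_nat d.-1 k) -mcstM mulVf ?mcst1 // pnatr_eq0 -lt0n.
have n0 : (0 < d.-1)%N by rewrite -ltnS prednK.
have hall := nil_abstract n0 hunits hder h0 hsz.
have hall' : forall i : 'I_d.-1, exists N, exists A : 'I_d.-1 -> mpoly d.-1,
    (forall j, inS d (A j)) /\ mvar d.-1 i ^+ N = \sum_j A j * Fi d j.
  move=> i; have [N [A hA]] := hall i; exists N, (fun j => val (A j)); split.
    by move=> j; exact: (valP (A j)).
  have := congr1 val hA; rewrite rmorphXn rmorph_sum /= => ->; apply: eq_bigr => j _.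
  congr (_ * _); have := horner_map val fsS (sS j); rewrite hmap /= => <-.
  by [].
have [Nf hN] := fin_all_exists hall'.
have [Af hA] := fin_all_exists hN.
pose D := (\max_(i < d.-1) Nf i).+1.
exists D; split => //.
exists (fun i j : 'I_d.-1 => hc d.-1 (D%:Z - d%:Z) (mvar d.-1 i ^+ (D - Nf i) * Af i j)).
split.
  move=> i j; split; last exact: hc_homog.
  apply: hc_inS; apply: inSM; first by apply: inS_exp; apply: inS_mvar.
  by case: (hA i) => h _; apply: h.
move=> i.
have hNi : (Nf i <= D)%N by apply: leq_trans (leq_bigmax i) _.
have e1 : mvar d.-1 i ^+ D = \sum_(j < d.-1) (mvar d.-1 i ^+ (D - Nf i) * Af i j) * Fi d j.
  rewrite -(subnK hNi) exprD; case: (hA i) => _ ->; rewrite mulr_sumr.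
  by apply: eq_bigr => j _; rewrite mulrA subnK.
rewrite -{1}(hc_id (homog_exp D (homog_mvar d.-1 i))) e1 hc_sum; apply: eq_bigr => j _.
by rewrite (hcM _ _ (Fi_homog j d1)).
Qed.
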